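(* Let $n\geq2$, let $\xi^1,\dots,\xi^{n-1}\in\mathbb{Q}^3\setminus\{0\}$ and $\xi^n\in\mathbb{Q}^3$. Then there exist points $x^1,\dots,x^n\in\mathbb{R}^3$ such that: if $\xi^n\neq0$, then $\Pi(x^i+\mathbb{R}\xi^i)\cap\Pi(x^j+\mathbb{R}\xi^j)=\emptyset$ for all $i\neq j$ in $\{1,\dots,n\}$; and if $\xi^n=0$, then $\Pi(x^i+\mathbb{R}\xi^i)\cap\Pi(x^j+\mathbb{R}\xi^j)=\emptyset$ for all $i\neq j$ in $\{1,\dots,n-1\}$ and $0_{Y_3}\notin\Pi(x^i+\mathbb{R}\xi^i)$ for all $i\in\{1,\dots,n-1\}$.
   Context: $Y_3=\mathbb{R}^3/\mathbb{Z}^3$, $\Pi:\mathbb{R}^3\to Y_3$ is the canonical surjection, and $0_{Y_3}=\Pi(0)$. *)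

(* Defs.v *)
From Stdlib Require Import Reals QArith Qreals.
Open Scope R_scope.

Record R3 := mkR3 { r1 : R; r2 : R; r3 : R }.
Record Q3 := mkQ3 { q1 : Q; q2 : Q; q3 : Q }.

Definition Q3zero (v : Q3) : Prop :=
  Qeq (q1 v) 0%Q /\ Qeq (q2 v) 0%Q /\ Qeq (q3 v) 0%Q.

Definition is_int (r : R) : Prop := exists k : Z, r = IZR k.

(* Pi a = Pi b in Y_3 = R^3/Z^3  iff  a - b in Z^3. *)
Definition torus_eq (a b : R3) : Prop :=
  is_int (r1 a - r1 b) /\ is_int (r2 a - r2 b) /\ is_int (r3 a - r3 b).

Definition line_pt (x : R3) (xi : Q3) (s : R) : R3 :=
  mkR3 (r1 x + s * Q2R (q1 xi)) (r2 x + s * Q2R (q2 xi)) (r3 x + s * Q2R (q3 xi)).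

Definition in_proj_line (x : R3) (xi : Q3) (y : R3) : Prop :=
  exists s : R, torus_eq (line_pt x xi s) y.

Definition proj_lines_disjoint (x : R3) (xi : Q3) (x' : R3) (xi' : Q3) : Prop :=
  ~ exists y : R3, in_proj_line x xi y /\ in_proj_line x' xi' y.

Definition origin3 : R3 := mkR3 0 0 0.

(* Main.v *)
Require Import Defs.
From Stdlib Require Import Reals QArith Qreals ZArith Lia Psatz Lra.
Open Scope R_scope.

Local Open Scope Z_scope.
Lemma absprod B x y : Z.abs x <= B -> Z.abs y <= B -> Z.abs (x*y) <= B*B.
Proof. intros Hx Hy. rewrite Z.abs_mul. apply Z.mul_le_mono_nonneg; lia. Qed.
Lemma absdiff B x y z t : Z.abs x <= B -> Z.abs y <= B -> Z.abs z <= B -> Z.abs t <= B ->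
     Z.abs (x*y - z*t) <= 2*B*B+B.
Proof.
  intros Hx Hy Hz Ht. pose proof (absprod B x y Hx Hy). pose proof (absprod B z t Hz Ht).
  assert (HB: 0 <= B) by lia.
  assert (HBB: 0 <= B*B) by (apply Z.mul_nonneg_nonneg; lia).
  lia.
Qed.
Lemma orth_cross (B a1 a2 a3 b1 b2 b3 : Z) :
  Z.abs a1 <= B -> Z.abs a2 <= B -> Z.abs a3 <= B ->
  Z.abs b1 <= B -> Z.abs b2 <= B -> Z.abs b3 <= B ->
  ~(a2*b3-a3*b2 = 0 /\ a3*b1-a1*b3 = 0 /\ a1*b2-a2*b1 = 0) ->
  exists c1 c2 c3, ~(c1=0/\c2=0/\c3=0) /\ c1*a1+c2*a2+c3*a3 = 0 /\
    c1*b1+c2*b2+c3*b3 = 0 /\ Z.abs c1 <= 2*B*B+B /\ Z.abs c2 <= 2*B*B+B /\ Z.abs c3 <= 2*B*B+B.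
Proof.
  intros H1 H2 H3 H4 H5 H6 Hn.
  exists (a2*b3-a3*b2), (a3*b1-a1*b3), (a1*b2-a2*b1).
  split; [exact Hn|]. split; [ring|]. split; [ring|].
  split; [apply absdiff; assumption|]. split; apply absdiff; assumption.
Qed.
Lemma orth_par1 (B a1 a2 a3 b1 b2 b3 : Z) :
  Z.abs a1 <= B -> Z.abs a2 <= B -> Z.abs a3 <= B ->
  a2*b3-a3*b2 = 0 -> a3*b1-a1*b3 = 0 -> a1*b2-a2*b1 = 0 ->
  ~(a1=0/\a2=0/\a3=0) ->
  exists c1 c2 c3, ~(c1=0/\c2=0/\c3=0) /\ c1*a1+c2*a2+c3*a3 = 0 /\
    c1*b1+c2*b2+c3*b3 = 0 /\ Z.abs c1 <= 2*B*B+B /\ Z.abs c2 <= 2*B*B+B /\ Z.abs c3 <= 2*B*B+B.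
Proof.
  intros H1 H2 H3 E1 E2 E3 Hn.
  assert (HB: 0 <= B) by lia.
  assert (HBB: 0 <= B*B) by (apply Z.mul_nonneg_nonneg; lia).
  destruct (Z.eq_dec a1 0) as [Z1|Z1].
  - destruct (Z.eq_dec a2 0) as [Z2|Z2].
    + exists 0, (-a3), a2. split; [intros [_ [? _]]; apply Hn; repeat split; lia|].
      split; [ring|]. split; [lia|]. split; [lia|]. split; lia.
    + exists (-a2), a1, 0. split; [intros [? _]; lia|].
      split; [ring|]. split; [lia|]. split; [lia|]. split; lia.
  - exists a3, 0, (-a1). split; [intros [_ [_ ?]]; lia|].
      split; [ring|]. split; [lia|]. split; [lia|]. split; lia.
Qed.
Lemma orth (B a1 a2 a3 b1 b2 b3 : Z) :
  Z.abs a1 <= B -> Z.abs a2 <= B -> Z.abs a3 <= B ->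
  Z.abs b1 <= B -> Z.abs b2 <= B -> Z.abs b3 <= B ->
  ~(a1=0/\a2=0/\a3=0) \/ ~(b1=0/\b2=0/\b3=0) ->
  exists c1 c2 c3, ~(c1=0/\c2=0/\c3=0) /\ c1*a1+c2*a2+c3*a3 = 0 /\
    c1*b1+c2*b2+c3*b3 = 0 /\ Z.abs c1 <= 2*B*B+B /\ Z.abs c2 <= 2*B*B+B /\ Z.abs c3 <= 2*B*B+B.
Proof.
  intros H1 H2 H3 H4 H5 H6 Hn.
  destruct (Z.eq_dec (a2*b3-a3*b2) 0) as [E1|E1];
  [destruct (Z.eq_dec (a3*b1-a1*b3) 0) as [E2|E2];
  [destruct (Z.eq_dec (a1*b2-a2*b1) 0) as [E3|E3]|]|];
  try (apply orth_cross; auto; tauto).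
  destruct Hn as [Hn|Hn].
  - apply orth_par1; auto.
  - destruct (orth_par1 B b1 b2 b3 a1 a2 a3) as [c1 [c2 [c3 [? [? [? ?]]]]]]; auto; try lia.
    exists c1, c2, c3. tauto.
Qed.
Lemma cw_nz (L c1 c2 c3 : Z) : 0 <= L -> Z.abs c1 <= L -> Z.abs c2 <= L -> Z.abs c3 <= L ->
  ~(c1=0/\c2=0/\c3=0) -> c1 + c2*(2*L+1) + c3*((2*L+1)*(2*L+1)) <> 0.
Proof.
  intros HL H1 H2 H3 Hn E.
  set (M := 2*L+1) in *.
  assert (HM0 : 0 < M) by (subst M; lia).
  assert (HM : 2*Z.abs c1 < M /\ 2*Z.abs c2 < M /\ 2*Z.abs c3 < M) by (subst M; lia).
  destruct (Z.eq_dec c3 0).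
  - subst c3. destruct (Z.eq_dec c2 0).
    + subst. lia.
    + assert (Z.abs (c2*M) >= M).
      { rewrite Z.abs_mul, (Z.abs_eq M) by lia.
        assert (1 <= Z.abs c2) by lia. nia. }
      assert (c1 = - (c2*M)) by lia. rewrite H0, Z.abs_opp in H1. lia.
  - assert (A3: Z.abs (c3*(M*M)) >= M*M).
    { rewrite Z.abs_mul, (Z.abs_eq (M*M)) by nia.
      assert (1 <= Z.abs c3) by lia. nia. }
    assert (A2: Z.abs (c2*M) <= L * M).
    { rewrite Z.abs_mul, (Z.abs_eq M) by lia. nia. }
    assert (c1 + c2*M = - (c3*(M*M))) by lia.
    assert (Z.abs (c1 + c2*M) <= L + L*M) by (pose proof (Z.abs_triangle c1 (c2*M)); lia).
    rewrite H, Z.abs_opp in H0.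
    assert (L + L*M < M*M) by (subst M; nia). lia.
Qed.
Lemma cw_bd (L c1 c2 c3 : Z) : 0 <= L -> Z.abs c1 <= L -> Z.abs c2 <= L -> Z.abs c3 <= L ->
  Z.abs (c1 + c2*(2*L+1) + c3*((2*L+1)*(2*L+1))) <= L*(1+(2*L+1)+(2*L+1)*(2*L+1)).
Proof.
  intros HL H1 H2 H3.
  set (M := 2*L+1) in *.
  assert (HM0 : 0 < M) by (subst M; lia).
  assert (A2: Z.abs (c2*M) <= L * M).
  { rewrite Z.abs_mul, (Z.abs_eq M) by lia. nia. }
  assert (A3: Z.abs (c3*(M*M)) <= L * (M*M)).
  { rewrite Z.abs_mul, (Z.abs_eq (M*M)) by nia. nia. }
  pose proof (Z.abs_triangle c1 (c2*M)). pose proof (Z.abs_triangle (c1+c2*M) (c3*(M*M))).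
  lia.
Qed.
Lemma final (P Q N n K d cw : Z) : 0 < Z.abs d <= n -> 0 < Z.abs cw <= K -> N = n*K+1 ->
  P = d * cw -> P = Q * N -> False.
Proof.
  intros Hd Hc HN HP E.
  assert (0 < Z.abs P <= n*K).
  { subst P; rewrite Z.abs_mul; nia. }
  rewrite E, Z.abs_mul in H. assert (0 < N) by nia. rewrite (Z.abs_eq N) in H by lia.
  assert (1 <= Z.abs Q) by (destruct (Z.eq_dec Q 0); [subst; simpl in H; lia | lia]).
  nia.
Qed.
Local Close Scope Z_scope.

Definition den (q : Q) : Z := Zpos (Qden q).
Definition v1 (x : Q3) : Z := (Qnum (q1 x) * den (q2 x) * den (q3 x))%Z.
Definition v2 (x : Q3) : Z := (Qnum (q2 x) * den (q1 x) * den (q3 x))%Z.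
Definition v3 (x : Q3) : Z := (Qnum (q3 x) * den (q1 x) * den (q2 x))%Z.
Definition Dn (x : Q3) : Z := (den (q1 x) * den (q2 x) * den (q3 x))%Z.

Lemma den_nz (q : Q) : IZR (den q) <> 0.
Proof. unfold den. apply not_0_IZR. lia. Qed.

Lemma Q2R_v (c1 c2 c3 : Z) (x : Q3) :
  IZR c1 * Q2R (q1 x) + IZR c2 * Q2R (q2 x) + IZR c3 * Q2R (q3 x)
  = IZR (c1 * v1 x + c2 * v2 x + c3 * v3 x) / IZR (Dn x).
Proof.
  unfold Q2R, v1, v2, v3, Dn. rewrite !plus_IZR, !mult_IZR.
  pose proof (den_nz (q1 x)). pose proof (den_nz (q2 x)). pose proof (den_nz (q3 x)).
  unfold den in *. field. repeat split; auto.
Qed.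

Lemma nz_v (x : Q3) : ~ Q3zero x -> ~ (v1 x = 0 /\ v2 x = 0 /\ v3 x = 0)%Z.
Proof.
  intros H [E1 [E2 E3]]. apply H. unfold v1, v2, v3, den in *.
  unfold Q3zero, Qeq; simpl. nia.
Qed.

Fixpoint Bs (xi : nat -> Q3) (m : nat) : Z :=
  match m with
  | O => 0%Z
  | S m => (Bs xi m + Z.abs (v1 (xi m)) + Z.abs (v2 (xi m)) + Z.abs (v3 (xi m)))%Z
  end.

Lemma Bs_nonneg xi m : (0 <= Bs xi m)%Z.
Proof. induction m; simpl; lia. Qed.

Lemma Bs_mono xi m m' : (m <= m')%nat -> (Bs xi m <= Bs xi m')%Z.
Proof. induction 1; simpl; lia. Qed.

Lemma Bs_bound xi m i : (i < m)%nat ->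
  (Z.abs (v1 (xi i)) <= Bs xi m /\ Z.abs (v2 (xi i)) <= Bs xi m /\ Z.abs (v3 (xi i)) <= Bs xi m)%Z.
Proof.
  intros H. pose proof (Bs_mono xi (S i) m H). simpl in H0.
  pose proof (Bs_nonneg xi i). lia.
Qed.

Definition LL (xi : nat -> Q3) (n : nat) : Z := (2 * Bs xi n * Bs xi n + Bs xi n)%Z.
Definition MM xi n : Z := (2 * LL xi n + 1)%Z.
Definition KK xi n : Z := (LL xi n * (1 + MM xi n + MM xi n * MM xi n))%Z.
Definition NN xi n : Z := (Z.of_nat n * KK xi n + 1)%Z.
Definition uu (n i : nat) : Z := Z.of_nat (n - 1 - i).
Definition xpt xi n i : R3 :=
  mkR3 (IZR (uu n i) / IZR (NN xi n)) (IZR (uu n i * MM xi n) / IZR (NN xi n))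
       (IZR (uu n i * (MM xi n * MM xi n)) / IZR (NN xi n)).

Lemma LL_nonneg xi n : (0 <= LL xi n)%Z.
Proof. unfold LL. pose proof (Bs_nonneg xi n). nia. Qed.

Lemma NN_pos xi n : (0 < NN xi n)%Z.
Proof.
  unfold NN, KK, MM. pose proof (LL_nonneg xi n).
  assert (0 <= LL xi n * (1 + (2 * LL xi n + 1) + (2 * LL xi n + 1) * (2 * LL xi n + 1)))%Z by nia.
  nia.
Qed.


Lemma alg (N u1 u2 M c1 c2 c3 s t X1 X2 X3 Y1 Y2 Y3 y1 y2 y3 : R) : N <> 0 ->
  c1 * X1 + c2 * X2 + c3 * X3 = 0 -> c1 * Y1 + c2 * Y2 + c3 * Y3 = 0 ->
  (u1 - u2) * (c1 + c2 * M + c3 * (M * M)) =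
  (c1 * (u1 / N + s * X1 - y1 - (u2 / N + t * Y1 - y1)) +
   c2 * (u1 * M / N + s * X2 - y2 - (u2 * M / N + t * Y2 - y2)) +
   c3 * (u1 * (M * M) / N + s * X3 - y3 - (u2 * (M * M) / N + t * Y3 - y3))) * N.
Proof.
  intros HN H1 H2.
  assert (E : (c1 * (u1 / N + s * X1 - y1 - (u2 / N + t * Y1 - y1)) +
   c2 * (u1 * M / N + s * X2 - y2 - (u2 * M / N + t * Y2 - y2)) +
   c3 * (u1 * (M * M) / N + s * X3 - y3 - (u2 * (M * M) / N + t * Y3 - y3))) * N
   = (u1 - u2) * (c1 + c2 * M + c3 * (M * M)) + N * (s * (c1 * X1 + c2 * X2 + c3 * X3) - t * (c1 * Y1 + c2 * Y2 + c3 * Y3)))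
   by (field; exact HN).
  rewrite E, H1, H2. ring.
Qed.

Lemma uu_diff n i j : (i < n)%nat -> (j < n)%nat -> i <> j ->
  (0 < Z.abs (uu n i - uu n j) <= Z.of_nat n)%Z.
Proof. intros. unfold uu. lia. Qed.

Lemma pair_disj xi n i j : (i < n)%nat -> (j < n)%nat -> i <> j ->
  (~ Q3zero (xi i) \/ ~ Q3zero (xi j)) ->
  proj_lines_disjoint (xpt xi n i) (xi i) (xpt xi n j) (xi j).
Proof.
  intros Hi Hj Hij Hnz [y [[s Hs] [t Ht]]].
  destruct (Bs_bound xi n i Hi) as [A1 [A2 A3]].
  destruct (Bs_bound xi n j Hj) as [B1 [B2 B3]].
  destruct (orth (Bs xi n) (v1 (xi i)) (v2 (xi i)) (v3 (xi i)) (v1 (xi j)) (v2 (xi j)) (v3 (xi j)))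
    as [c1 [c2 [c3 [Hc [Ca [Cb [Bc1 [Bc2 Bc3]]]]]]]]; auto.
  { destruct Hnz; [left|right]; apply nz_v; auto. }
  fold (LL xi n) in Bc1, Bc2, Bc3.
  pose proof (LL_nonneg xi n) as HL.
  pose proof (cw_nz (LL xi n) c1 c2 c3 HL Bc1 Bc2 Bc3 Hc) as Hcw.
  pose proof (cw_bd (LL xi n) c1 c2 c3 HL Bc1 Bc2 Bc3) as Hcb.
  fold (MM xi n) in Hcw, Hcb. fold (KK xi n) in Hcb.
  pose proof (NN_pos xi n) as HN.
  assert (HNr : IZR (NN xi n) <> 0) by (apply not_0_IZR; lia).
  pose proof (Q2R_v c1 c2 c3 (xi i)) as Qi. rewrite Ca in Qi.
  pose proof (Q2R_v c1 c2 c3 (xi j)) as Qj. rewrite Cb in Qj.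
  assert (Si : IZR c1 * Q2R (q1 (xi i)) + IZR c2 * Q2R (q2 (xi i)) + IZR c3 * Q2R (q3 (xi i)) = 0)
    by (rewrite Qi; unfold Rdiv; ring).
  assert (Sj : IZR c1 * Q2R (q1 (xi j)) + IZR c2 * Q2R (q2 (xi j)) + IZR c3 * Q2R (q3 (xi j)) = 0)
    by (rewrite Qj; unfold Rdiv; ring).
  clear Qi Qj.
  destruct Hs as [[k1 e1] [[k2 e2] [k3 e3]]].
  destruct Ht as [[l1 f1] [[l2 f2] [l3 f3]]].
  unfold line_pt, xpt in *; simpl in *.
  assert (key : IZR ((uu n i - uu n j) * (c1 + c2 * MM xi n + c3 * (MM xi n * MM xi n)))
     = IZR ((c1 * (k1 - l1) + c2 * (k2 - l2) + c3 * (k3 - l3)) * NN xi n)).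
  { rewrite (mult_IZR _ (NN xi n)).
    rewrite !plus_IZR, !mult_IZR, !minus_IZR, <- e1, <- e2, <- e3, <- f1, <- f2, <- f3.
    rewrite ?plus_IZR, ?mult_IZR, ?minus_IZR, ?plus_IZR, ?mult_IZR, ?plus_IZR, ?mult_IZR.
    apply alg; assumption. }
  apply eq_IZR in key.
  assert (Hd : (0 < Z.abs (uu n i - uu n j) <= Z.of_nat n)%Z) by (apply uu_diff; assumption).
  assert (Hc' : (0 < Z.abs (c1 + c2 * MM xi n + c3 * (MM xi n * MM xi n)) <= KK xi n)%Z) by (clear - Hcw Hcb; lia).
  exact (final _ _ (NN xi n) (Z.of_nat n) (KK xi n) (uu n i - uu n j)
     (c1 + c2 * MM xi n + c3 * (MM xi n * MM xi n)) Hd Hc' eq_refl eq_refl key).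
Qed.

Theorem lemma4p1 (n : nat) (xi : nat -> Q3) :
  (2 <= n)%nat ->
  (forall i : nat, (i < n - 1)%nat -> ~ Q3zero (xi i)) ->
  exists x : nat -> R3,
    (~ Q3zero (xi (n - 1)%nat) ->
       forall i j : nat, (i < n)%nat -> (j < n)%nat -> i <> j ->
         proj_lines_disjoint (x i) (xi i) (x j) (xi j)) /\
    (Q3zero (xi (n - 1)%nat) ->
       (forall i j : nat, (i < n - 1)%nat -> (j < n - 1)%nat -> i <> j ->
          proj_lines_disjoint (x i) (xi i) (x j) (xi j)) /\
       (forall i : nat, (i < n - 1)%nat -> ~ in_proj_line (x i) (xi i) origin3)).
Proof.
  intros Hn Hnz. exists (xpt xi n). split.
  - intros Hlast i j Hi Hj Hij. apply pair_disj; auto. left.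
    destruct (Nat.eq_dec i (n-1)); [subst; auto | apply Hnz; lia].
  - intros Hz. split.
    + intros i j Hi Hj Hij. apply pair_disj; try lia; auto.
    + intros i Hi Hin. apply (pair_disj xi n i (n-1)); try lia; auto.
      exists origin3. split; auto. exists 0.
      unfold torus_eq, line_pt, xpt, uu; simpl.
      replace (n-1-(n-1))%nat with 0%nat by lia. simpl.
      split; [|split]; exists 0%Z; unfold Rdiv; ring.
Qed.
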